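(* Let $\alpha:I\to\mathbb{E}^3$ ($I\subset\mathbb{R}$ an open interval) be a smooth space curve parametrized by arclength $s$ with curvature $\kappa\equiv 1$. Then the tangent indicatrix $T=\alpha'$ of $\alpha$ is a spherical helix if and only if $\det(\alpha^{(3)}(s),\alpha^{(4)}(s),\alpha^{(5)}(s))=0$ for all $s\in I$.
   Context: $\alpha^{(k)}$ denotes the $k$-th derivative of $\alpha$ with respect to arclength, and $\det(u,v,w)$ is the determinant of the $3\times 3$ matrix with columns $u,v,w$. $\{T,N,B\}$ is the Frenet frame of $\alpha$, with $T'=\kappa N$, $N'=-\kappa T+\tau B$, $B'=-\tau N$, where $\tau$ is the torsion. The tangent indicatrix is the curve $s\mapsto T(s)$ on the unit sphere; since $\kappa\equiv1$, $s$ is also an arclength parameter of $T$. A curve is a helix (curve of constant slope) if its unit tangent vector makes a constant angle with a fixed direction; a spherical helix is a helix lying on a sphere. *)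

(* Defs.v *)
From Stdlib Require Import Reals.
Open Scope R_scope.

Record vec3 : Type := mkV { vx : R; vy : R; vz : R }.

Definition vzero : vec3 := mkV 0 0 0.
Definition vsub (u v : vec3) : vec3 := mkV (vx u - vx v) (vy u - vy v) (vz u - vz v).
Definition vscale (a : R) (u : vec3) : vec3 := mkV (a * vx u) (a * vy u) (a * vz u).
Definition dot (u v : vec3) : R := vx u * vx v + vy u * vy v + vz u * vz v.
Definition vnorm (u : vec3) : R := sqrt (dot u u).
Definition cross (u v : vec3) : vec3 :=
  mkV (vy u * vz v - vz u * vy v)
      (vz u * vx v - vx u * vz v)
      (vx u * vy v - vy u * vx v).
(* det(u,v,w) = determinant of the 3x3 matrix with columns u, v, w *)
Definition det3 (u v w : vec3) : R := dot u (cross v w).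

Definition is_open_interval (I : R -> Prop) : Prop :=
  (exists x, I x) /\
  (forall x y z, I x -> I z -> x <= y <= z -> I y) /\
  (forall x, I x -> exists e, 0 < e /\ forall y, Rabs (y - x) < e -> I y).

Definition vderiv (g : R -> vec3) (s : R) (v : vec3) : Prop :=
  derivable_pt_lim (fun t => vx (g t)) s (vx v) /\
  derivable_pt_lim (fun t => vy (g t)) s (vy v) /\
  derivable_pt_lim (fun t => vz (g t)) s (vz v).

(* D is the sequence of all derivatives of a smooth curve on I:
   D (k+1) is the derivative of D k at every point of I.  Thus D 0 is
   C^infinity on I and D k is its k-th derivative. *)
Definition derivative_tower (I : R -> Prop) (D : nat -> R -> vec3) : Prop :=
  forall k s, I s -> vderiv (D k) s (D (S k) s).

Definition is_helix (I : R -> Prop) (g : R -> vec3) : Prop :=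
  exists g' : R -> vec3,
    (forall s, I s -> vderiv g s (g' s)) /\
    (forall s, I s -> g' s <> vzero) /\
    exists u : vec3, vnorm u = 1 /\
    exists theta : R, forall s, I s ->
      dot (vscale (/ vnorm (g' s)) (g' s)) u = cos theta.

Definition on_sphere (I : R -> Prop) (g : R -> vec3) : Prop :=
  exists (c : vec3) (r : R), 0 < r /\ forall s, I s -> vnorm (vsub (g s) c) = r.

Definition is_spherical_helix (I : R -> Prop) (g : R -> vec3) : Prop :=
  is_helix I g /\ on_sphere I g.

(* Main.v *)
Require Import Defs.
From Stdlib Require Import Reals Lra Psatz.
Open Scope R_scope.

Definition vadd (u v : vec3) : vec3 := mkV (vx u + vx v) (vy u + vy v) (vz u + vz v).

Lemma dl_plus f g x l m L : derivable_pt_lim f x l -> derivable_pt_lim g x m ->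
  L = l + m -> derivable_pt_lim (fun t => f t + g t) x L.
Proof. intros; subst; apply (derivable_pt_lim_plus f g); auto. Qed.
Lemma dl_minus f g x l m L : derivable_pt_lim f x l -> derivable_pt_lim g x m ->
  L = l - m -> derivable_pt_lim (fun t => f t - g t) x L.
Proof. intros; subst; apply (derivable_pt_lim_minus f g); auto. Qed.
Lemma dl_mult f g x l m L : derivable_pt_lim f x l -> derivable_pt_lim g x m ->
  L = l * g x + f x * m -> derivable_pt_lim (fun t => f t * g t) x L.
Proof. intros; subst; apply (derivable_pt_lim_mult f g); auto. Qed.
Lemma dl_div f g x l m L : derivable_pt_lim f x l -> derivable_pt_lim g x m ->
  g x <> 0 -> L = (l * g x - m * f x) / (g x)² -> derivable_pt_lim (fun t => f t / g t) x L.
Proof. intros; subst; apply (derivable_pt_lim_div f g); auto. Qed.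

Lemma dot_deriv f g s f' g' : vderiv f s f' -> vderiv g s g' ->
  derivable_pt_lim (fun t => dot (f t) (g t)) s (dot f' (g s) + dot (f s) g').
Proof.
  intros [a [b c]] [d [e h]]; unfold dot.
  eapply dl_plus; [eapply dl_plus; [eapply dl_mult; eauto| eapply dl_mult; eauto|]
    | eapply dl_mult; eauto |]; reflexivity || ring.
Qed.

Lemma cross_deriv f g s f' g' : vderiv f s f' -> vderiv g s g' ->
  vderiv (fun t => cross (f t) (g t)) s (vadd (cross f' (g s)) (cross (f s) g')).
Proof.
  intros [a [b c]] [d [e h]]; unfold cross, vadd; simpl.
  split; [|split]; (eapply dl_minus; [eapply dl_mult; eauto| eapply dl_mult; eauto|]); simpl; ring.
Qed.

Lemma const_deriv (u : vec3) s : vderiv (fun _ => u) s vzero.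
Proof. split; [|split]; apply derivable_pt_lim_const. Qed.

Lemma loc_const J f c x l : is_open_interval J -> (forall s, J s -> f s = c) -> J x ->
  derivable_pt_lim f x l -> l = 0.
Proof.
  intros [_ [_ Ho]] Hc Jx Hd.
  apply (uniqueness_limite f x); auto.
  intros eps Heps. destruct (Ho x Jx) as [e [He Hb]].
  exists (mkposreal e He). intros h Hh0 Hh. simpl in Hh.
  rewrite (Hc (x+h)), (Hc x); auto.
  - replace ((c - c) / h - 0) with 0 by (field; auto). rewrite Rabs_R0; lra.
  - apply Hb. replace (x + h - x) with h by ring. auto.
Qed.

Lemma zero_deriv_const J f : is_open_interval J -> (forall s, J s -> derivable_pt_lim f s 0) ->
  forall x y, J x -> J y -> f x = f y.
Proof.
  intros [_ [Hc _]] Hd.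
  assert (K : forall x y, x < y -> J x -> J y -> f x = f y).
  { intros x y Hxy Jx Jy.
    destruct (MVT_cor2 f (fun _ => 0) x y Hxy) as [c [E _]].
    - intros c Hc'. apply Hd. apply (Hc x c y); auto.
    - lra. }
  intros x y Jx Jy. destruct (total_order_T x y) as [[H|H]|H].
  - auto.
  - subst; auto.
  - symmetry; auto.
Qed.

Lemma dot_comm u v : dot u v = dot v u.
Proof. unfold dot; ring. Qed.

Lemma norm1 v : vnorm v = 1 -> dot v v = 1.
Proof.
  unfold vnorm; intro H. rewrite <- (sqrt_sqrt (dot v v)).
  - rewrite H; ring.
  - unfold dot; nra.
Qed.

Lemma Dconst J D i j c : is_open_interval J -> derivative_tower J D ->
  (forall s, J s -> dot (D i s) (D j s) = c) ->
  forall s, J s -> dot (D (S i) s) (D j s) + dot (D i s) (D (S j) s) = 0.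
Proof.
  intros HJ HT Hc s Js.
  eapply (loc_const J (fun t => dot (D i t) (D j t))); eauto.
  apply dot_deriv; apply HT; auto.
Qed.

Lemma Dconstu J D i u c : is_open_interval J -> derivative_tower J D ->
  (forall s, J s -> dot (D i s) u = c) ->
  forall s, J s -> dot (D (S i) s) u = 0.
Proof.
  intros HJ HT Hc s Js.
  replace (dot (D (S i) s) u) with (dot (D (S i) s) u + dot (D i s) vzero)
    by (unfold dot, vzero; simpl; ring).
  eapply (loc_const J (fun t => dot (D i t) u)); eauto.
  apply dot_deriv; [apply HT; auto| apply const_deriv].
Qed.

Lemma det_ident a b c u : det3 a b c * dot u u =
  dot a u * dot (cross b c) u + dot b u * dot (cross c a) u + dot c u * dot (cross a b) u.
Proof. unfold det3, dot, cross; simpl; ring. Qed.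

Lemma lagrange a b c d : dot (cross a b) (cross c d) = dot a c * dot b d - dot a d * dot b c.
Proof. unfold dot, cross; simpl; ring. Qed.

Lemma num_ident a3 a4 a5 w :
  let V := cross a3 a4 in let V' := vadd (cross a4 a4) (cross a3 a5) in
  let a := dot V w in
  ((dot V' w + dot V vzero) * a + a * (dot V' w + dot V vzero)) * dot V V
   - (dot V' V + dot V V') * (a * a)
  = 2 * a * det3 a3 a4 a5 * dot (cross a3 V) w.
Proof. unfold det3, dot, cross, vadd, vzero; simpl; ring. Qed.

Lemma V_D3 a3 a4 : dot (cross a3 a4) a3 = 0.
Proof. unfold dot, cross; simpl; ring. Qed.

Lemma dot_pos a b : dot a b <> 0 -> 0 < dot a a.
Proof.
  unfold dot; destruct a as [x y z], b; simpl. intros H.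
  destruct (Rle_lt_dec (x*x+y*y+z*z) 0) as [L|L]; auto.
  assert (x = 0) by nra. assert (y = 0) by nra. assert (z = 0) by nra.
  subst. exfalso; apply H; ring.
Qed.

Lemma dot_bound a b : dot a a = 1 -> dot b b = 1 -> -1 <= dot a b <= 1.
Proof. unfold dot; destruct a as [a1 a2 a3], b as [b1 b2 b3]; simpl; intros.
  pose proof (Rle_0_sqr (a1-b1)); pose proof (Rle_0_sqr (a2-b2)); pose proof (Rle_0_sqr (a3-b3)).
  pose proof (Rle_0_sqr (a1+b1)); pose proof (Rle_0_sqr (a2+b2)); pose proof (Rle_0_sqr (a3+b3)).
  unfold Rsqr in *. split; lra. Qed.

Lemma vsub0 v : vsub v vzero = v.
Proof. destruct v; unfold vsub, vzero; simpl; f_equal; ring. Qed.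

Theorem theorem1 (J : R -> Prop) (D : nat -> R -> vec3) :
  is_open_interval J ->
  derivative_tower J D ->
  (forall s, J s -> vnorm (D 1%nat s) = 1) ->
  (forall s, J s -> vnorm (D 2%nat s) = 1) ->
  (is_spherical_helix J (D 1%nat) <->
   forall s, J s -> det3 (D 3%nat s) (D 4%nat s) (D 5%nat s) = 0).
Proof.
  intros HJ HT H1 H2. split.
  - intros [[g' [Hg' [_ [u [Hu [th Hth]]]]]] _].
    assert (E2 : forall s, J s -> dot (D 2%nat s) u = cos th).
    { intros s Js. rewrite <- (Hth s Js).
      assert (g' s = D 2%nat s).
      { destruct (Hg' s Js) as [a [b c]]. destruct (HT 1%nat s Js) as [a' [b' c']].
        destruct (g' s), (D 2%nat s); simpl in *.
        f_equal; eapply uniqueness_limite; eauto. }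
      rewrite H, (H2 s Js), Rinv_1. unfold dot, vscale; simpl; ring. }
    pose proof (Dconstu J D 2 u _ HJ HT E2) as E3.
    pose proof (Dconstu J D 3 u _ HJ HT E3) as E4.
    pose proof (Dconstu J D 4 u _ HJ HT E4) as E5.
    intros s Js. pose proof (det_ident (D 3%nat s) (D 4%nat s) (D 5%nat s) u) as I.
    rewrite (norm1 u Hu), (E3 s Js), (E4 s Js), (E5 s Js) in I. lra.
  - intros Hdet.
    assert (e11 : forall s, J s -> dot (D 1%nat s) (D 1%nat s) = 1) by (intros; apply norm1; auto).
    assert (e22 : forall s, J s -> dot (D 2%nat s) (D 2%nat s) = 1) by (intros; apply norm1; auto).
    assert (e12 : forall s, J s -> dot (D 1%nat s) (D 2%nat s) = 0).
    { intros s Js. pose proof (Dconst J D 1 1 1 HJ HT e11 s Js). rewrite dot_comm in H; lra. }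
    assert (e13 : forall s, J s -> dot (D 1%nat s) (D 3%nat s) = -1).
    { intros s Js. pose proof (Dconst J D 1 2 0 HJ HT e12 s Js). rewrite (e22 s Js) in H; lra. }
    assert (e23 : forall s, J s -> dot (D 2%nat s) (D 3%nat s) = 0).
    { intros s Js. pose proof (Dconst J D 2 2 1 HJ HT e22 s Js). rewrite dot_comm in H; lra. }
    assert (e24 : forall s, J s -> dot (D 2%nat s) (D 4%nat s) = - dot (D 3%nat s) (D 3%nat s)).
    { intros s Js. pose proof (Dconst J D 2 3 0 HJ HT e23 s Js). lra. }
    assert (e14 : forall s, J s -> dot (D 1%nat s) (D 4%nat s) = 0).
    { intros s Js. pose proof (Dconst J D 1 3 (-1) HJ HT e13 s Js). rewrite (e23 s Js) in H; lra. }
    set (V := fun s => cross (D 3%nat s) (D 4%nat s)).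
    set (Nn := fun s => dot (V s) (V s)).
    assert (Npos : forall s, J s -> 0 < Nn s).
    { intros s Js.
      assert (P : dot (V s) (cross (D 1%nat s) (D 2%nat s)) = dot (D 3%nat s) (D 3%nat s)).
      { unfold V; rewrite lagrange, (dot_comm (D 3%nat s) (D 1%nat s)), (dot_comm (D 4%nat s) (D 2%nat s)),
          (dot_comm (D 3%nat s) (D 2%nat s)), (dot_comm (D 4%nat s) (D 1%nat s)), (e13 s Js), (e24 s Js),
          (e23 s Js), (e14 s Js); ring. }
      assert (Q : 0 < dot (D 3%nat s) (D 3%nat s)).
      { apply (dot_pos _ (D 1%nat s)). rewrite dot_comm, (e13 s Js). lra. }
      rewrite <- P in Q; clear P. apply (dot_pos _ (cross (D 1%nat s) (D 2%nat s))). lra. }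
    assert (Vd : forall s, J s -> vderiv V s (vadd (cross (D 4%nat s) (D 4%nat s)) (cross (D 3%nat s) (D 5%nat s))))
      by (intros; apply cross_deriv; apply HT; auto).
    assert (Fc : forall w x y, J x -> J y ->
      dot (V x) w * dot (V x) w / Nn x = dot (V y) w * dot (V y) w / Nn y).
    { intros w. apply (zero_deriv_const J (fun t => dot (V t) w * dot (V t) w / Nn t) HJ).
      intros s Js. pose proof (dot_deriv V (fun _ => w) s _ _ (Vd s Js) (const_deriv w s)) as Da.
      pose proof (dot_deriv V V s _ _ (Vd s Js) (Vd s Js)) as DN.
      eapply dl_div; [eapply dl_mult; [exact Da | exact Da | reflexivity] | exact DN
        | apply Rgt_not_eq, Npos; auto |].
      cbv beta. pose proof (num_ident (D 3%nat s) (D 4%nat s) (D 5%nat s) w) as NI. cbv zeta in NI.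
      unfold Nn, V. rewrite NI, (Hdet s Js). unfold Rdiv. ring. }
    destruct HJ as [[s0 Js0] HJ'].
    set (u := vscale (/ sqrt (Nn s0)) (V s0)).
    assert (N0 := Npos s0 Js0).
    assert (Hu : dot u u = 1).
    { unfold u. replace (dot (vscale (/ sqrt (Nn s0)) (V s0)) (vscale (/ sqrt (Nn s0)) (V s0)))
        with ((/ sqrt (Nn s0))² * Nn s0) by (unfold Nn, dot, vscale, Rsqr; simpl; ring).
      rewrite Rsqr_inv', Rsqr_sqrt by lra. field; lra. }
    assert (K3 : forall s1, J s1 -> dot (D 3%nat s1) u = 0).
    { intros s1 Js1. pose proof (Fc (D 3%nat s1) s0 s1 Js0 Js1) as F.
      assert (Z : dot (V s1) (D 3%nat s1) = 0) by (unfold V; apply V_D3).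
      rewrite Z in F. replace (0 * 0 / Nn s1) with 0 in F by (unfold Rdiv; ring).
      assert (A : dot (V s0) (D 3%nat s1) * dot (V s0) (D 3%nat s1) = 0).
      { apply (Rmult_eq_reg_r (/ Nn s0)). rewrite Rmult_0_l. exact F.
        apply Rgt_not_eq, Rinv_0_lt_compat; lra. }
      assert (A' : dot (V s0) (D 3%nat s1) = 0) by nra.
      unfold u. replace (dot (D 3%nat s1) (vscale (/ sqrt (Nn s0)) (V s0)))
        with (/ sqrt (Nn s0) * dot (V s0) (D 3%nat s1)) by (unfold dot, vscale; simpl; ring).
      rewrite A'; ring. }
    assert (C2 : forall s, J s -> dot (D 2%nat s) u = dot (D 2%nat s0) u).
    { intros s Js. apply (zero_deriv_const J (fun t => dot (D 2%nat t) u)); auto.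
      - split; [exists s0; auto | exact HJ'].
      - intros t Jt. pose proof (dot_deriv (D 2%nat) (fun _ => u) t _ _ (HT 2%nat t Jt) (const_deriv u t)) as Dd.
        replace 0 with (dot (D 3%nat t) u + dot (D 2%nat t) vzero); auto.
        rewrite (K3 t Jt). unfold dot, vzero; simpl; ring. }
    split.
    + exists (D 2%nat). split; [intros; apply HT; auto|]. split.
      { intros s Js E. pose proof (H2 s Js) as N. rewrite E in N.
        unfold vnorm, dot, vzero in N; simpl in N.
        replace (0*0+0*0+0*0) with 0 in N by ring. rewrite sqrt_0 in N. lra. }
      exists u. split.
      { unfold vnorm; rewrite Hu; apply sqrt_1. }
      exists (acos (dot (D 2%nat s0) u)). intros s Js.
      rewrite cos_acos by (apply dot_bound; auto).
      rewrite (H2 s Js), Rinv_1, <- (C2 s Js). unfold dot, vscale; simpl; ring.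
    + exists vzero, 1. split; [lra|]. intros s Js. rewrite vsub0; auto.
Qed.
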